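(* Let $\mathcal F$ be a saturated fusion system on a finite $p$-group $S$, and let $\mathcal G$ be a saturated subsystem of $\mathcal F$ on a subgroup $T\le S$. Suppose there exists an $\mathcal F$-centric subgroup $Q\le T$ with $\operatorname{Hom}_\mathcal F(Q,T)=\operatorname{Hom}_\mathcal G(Q,T)$. Then $\operatorname{Aut}_\mathcal F(T)=\operatorname{Aut}_\mathcal G(T)$ and $T=S$.
   Context: Fusion systems: Let $S$ be a finite $p$-group. A fusion system $\mathcal F$ on $S$ is a category whose objects are the subgroups of $S$ and whose morphism sets $\operatorname{Hom}_\mathcal F(P,R)$ are sets of injective group homomorphisms $P\to R$, such that (i) every conjugation map $x\mapsto gxg^{-1}$, $g\in S$, from $P$ to $R$ lies in $\operatorname{Hom}_\mathcal F(P,R)$, and (ii) every $\varphi\in\operatorname{Hom}_\mathcal F(P,R)$ factors as an isomorphism $P\to\varphi(P)$ in $\mathcal F$ with inverse in $\mathcal F$ followed by inclusion. A subsystem $\mathcal G$ on $T\le S$ is a fusion system on $T$ with $\operatorname{Hom}_\mathcal G(P,R)\subseteq\operatorname{Hom}_\mathcal F(P,R)$. $Q$ is fully $\mathcal F$-normalized (resp. centralized) if $|N_S(Q)|$ (resp. $|C_S(Q)|$) is maximal among $\mathcal F$-conjugates of $Q$; $Q$ is $\mathcal F$-centric if $C_S(Q')=Z(Q')$ for every $\mathcal F$-conjugate $Q'$. For $\varphi\in\operatorname{Hom}_\mathcal F(Q,S)$, $N_\varphi=\{g\in N_S(Q):\varphi c_g|_Q\varphi^{-1}\in\operatorname{Aut}_S(\varphi(Q))\}$,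 $\operatorname{Aut}_S(\cdot)$ denoting automorphisms induced by conjugation by elements of $S$. $\mathcal F$ is saturated if every fully normalized $Q$ is fully centralized with $\operatorname{Aut}_S(Q)$ a Sylow $p$-subgroup of $\operatorname{Aut}_\mathcal F(Q)$, and every $\varphi\in\operatorname{Hom}_\mathcal F(Q,S)$ with $\varphi(Q)$ fully centralized extends to a morphism of $\mathcal F$ defined on $N_\varphi$. *)

(* Defs.v *)
From HB Require Import structures.
From mathcomp Require Import all_boot all_fingroup all_solvable.
Set Implicit Arguments. Unset Strict Implicit. Unset Printing Implicit Defensive.
Local Open Scope group_scope.

Section FusionDefs.
Variable gT : finGroupType.

(* A morphism P -> R is represented by a finite function gT -> gT that is
   the identity outside P (canonical representative, independent of R). *)
Definition homs := {set gT} -> {set gT} -> {set {ffun gT -> gT}}.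

Definition is_inj_hom (P R : {set gT}) (f : {ffun gT -> gT}) : Prop :=
  [/\ {in P &, {morph f : x y / x * y}}, {in P &, injective f},
      f @: P \subset R & forall x, x \notin P -> f x = x].

(* conjugation x |-> g x g^-1 on P (note x ^ y = y^-1 x y in MathComp) *)
Definition conjf (P : {set gT}) (g : gT) : {ffun gT -> gT} :=
  [ffun x => if x \in P then x ^ g^-1 else x].

Definition compf (P : {set gT}) (h f : {ffun gT -> gT}) : {ffun gT -> gT} :=
  [ffun x => if x \in P then h (f x) else x].

Definition is_fusion_system (S : {set gT}) (F : homs) : Prop :=
  [/\ (forall P R : {group gT}, P \subset S -> R \subset S ->
         forall f, f \in F P R -> is_inj_hom P R f),
      (forall (P R : {group gT}) g, P \subset S -> R \subset S -> g \in S ->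
         P :^ g^-1 \subset R -> conjf P g \in F P R),
      (forall P Q R : {group gT}, P \subset S -> Q \subset S -> R \subset S ->
         forall f h, f \in F P Q -> h \in F Q R -> compf P h f \in F P R) &
      (forall P R : {group gT}, P \subset S -> R \subset S ->
         forall f, f \in F P R ->
           f \in F P (f @: P) /\
           exists2 g, g \in F (f @: P) P &
             (forall x, x \in P -> g (f x) = x) /\
             (forall y, y \in f @: P -> f (g y) = y))].

Definition is_subsystem (S : {set gT}) (F : homs) (T : {set gT}) (G : homs) : Prop :=
  is_fusion_system T G /\
  (forall P R : {group gT}, P \subset T -> R \subset T -> G P R \subset F P R).

Definition fully_normalized (S : {set gT}) (F : homs) (Q : {set gT}) : Prop :=
  forall f, f \in F Q S -> #|'N_S(f @: Q)| <= #|'N_S(Q)|.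

Definition fully_centralized (S : {set gT}) (F : homs) (Q : {set gT}) : Prop :=
  forall f, f \in F Q S -> #|'C_S(f @: Q)| <= #|'C_S(Q)|.

Definition centric (S : {set gT}) (F : homs) (Q : {set gT}) : Prop :=
  forall f, f \in F Q S -> 'C_S(f @: Q) = 'Z(f @: Q).

(* Aut_F(Q), as permutations of gT fixing everything outside Q *)
Definition AutF (F : homs) (Q : {set gT}) : {set {perm gT}} :=
  [set s : {perm gT} | [ffun x => s x] \in F Q Q].

Definition AutS (S Q : {set gT}) : {set {perm gT}} :=
  [set s : {perm gT} | [forall x, (x \notin Q) ==> (s x == x)] &&
     [exists g in 'N_S(Q), [forall x in Q, s x == x ^ g^-1]]].

Definition Nphi (S Q : {set gT}) (f : {ffun gT -> gT}) : {set gT} :=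
  [set g in 'N_S(Q) | [exists h in S, [forall y in Q, f (y ^ g^-1) == f y ^ h^-1]]].

Definition saturated (p : nat) (S : {set gT}) (F : homs) : Prop :=
  [/\ is_fusion_system S F,
      (forall Q : {group gT}, Q \subset S -> fully_normalized S F Q ->
         fully_centralized S F Q /\ p.-Sylow(AutF F Q) (AutS S Q)) &
      (forall (Q : {group gT}) f, Q \subset S -> f \in F Q S ->
         fully_centralized S F (f @: Q) ->
         exists2 g, g \in F (Nphi S Q f) S & forall x, x \in Q -> g x = f x)].

End FusionDefs.

(* Main.v *)
Require Import Defs.
From mathcomp Require Import all_boot all_fingroup all_solvable zify.
Set Implicit Arguments. Unset Strict Implicit. Unset Printing Implicit Defensive.
Local Open Scope group_scope.

Section Basic.
Variable gT : finGroupType.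
Implicit Types (P Q : {group gT}) (R : {set gT}) (f g h : {ffun gT -> gT}).

Lemma hom1 P R f : is_inj_hom P R f -> f 1 = 1.
Proof. case=> fM _ _ _; apply: (mulgI (f 1)); by rewrite -fM ?group1 // !mulg1. Qed.

Lemma homM P R f x y : is_inj_hom P R f -> x \in P -> y \in P -> f (x * y) = f x * f y.
Proof. by case=> fM _ _ _; apply: fM. Qed.

Lemma homV P R f x : is_inj_hom P R f -> x \in P -> f x^-1 = (f x)^-1.
Proof.
move=> hf Px; apply: (mulgI (f x)).
by rewrite -(homM hf) ?groupV // !mulgV (hom1 hf).
Qed.

Lemma homJ P R f x y : is_inj_hom P R f -> x \in P -> y \in P -> f (x ^ y) = f x ^ f y.
Proof.
move=> hf Px Py; rewrite !conjgE !(homM hf) ?(homV hf) ?groupM ?groupV //.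
Qed.

Lemma homX P R f x n : is_inj_hom P R f -> x \in P -> f (x ^+ n) = f x ^+ n.
Proof.
move=> hf Px; induction n as [|n IH]; first by rewrite !expg0 (hom1 hf).
by rewrite !expgS (homM hf) ?groupX // IH.
Qed.

Lemma hom_inj P R f x y : is_inj_hom P R f -> x \in P -> y \in P -> f x = f y -> x = y.
Proof. by case=> _ fI _ _; apply: fI. Qed.

Lemma hom_out P R f x : is_inj_hom P R f -> x \notin P -> f x = x.
Proof. by case=> _ _ _ H /H. Qed.

Lemma hom_in P R f x : is_inj_hom P R f -> x \in P -> f x \in R.
Proof. by case=> _ _ sub _ Px; apply: (subsetP sub); apply: imset_f. Qed.

Lemma hom_sub P R f : is_inj_hom P R f -> f @: P \subset R.
Proof. by case. Qed.

Lemma hom_img_group P R f : is_inj_hom P R f -> group_set (f @: P).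
Proof.
move=> hf; apply/group_setP; split.
  by apply/imsetP; exists 1; rewrite ?(hom1 hf).
move=> _ _ /imsetP[x Px ->] /imsetP[y Py ->].
by apply/imsetP; exists (x * y); rewrite ?groupM // (homM hf).
Qed.

Lemma card_hom_img P R f : is_inj_hom P R f -> #|f @: P| = #|P|.
Proof. by case=> _ fI _ _; apply: card_in_imset. Qed.

Lemma hom_aut_inj P f : is_inj_hom P P f -> injective f.
Proof.
move=> hf x y; case: (boolP (x \in P)) => Px; case: (boolP (y \in P)) => Py fxy.
- exact: hom_inj hf Px Py fxy.
- by have := hom_in hf Px; rewrite fxy (hom_out hf Py) (negbTE Py).
- by have := hom_in hf Py; rewrite -fxy (hom_out hf Px) (negbTE Px).
- by rewrite -(hom_out hf Px) -(hom_out hf Py).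
Qed.

Lemma center_img_card P R f : is_inj_hom P R f -> #|'Z(f @: P)| <= #|'Z(P)|.
Proof.
move=> hf; apply: leq_trans (leq_imset_card f _); apply: subset_leq_card.
apply/subsetP => z; rewrite inE => /andP[/imsetP[x Px ->] /centP cz].
apply: imset_f; rewrite inE Px; apply/centP => y Py.
apply: (hom_inj hf); rewrite ?groupM // !(homM hf) //.
by apply: cz; apply: imset_f.
Qed.

Definition permf P f (hf : is_inj_hom P P f) : {perm gT} := perm (hom_aut_inj hf).

Lemma permfE P f (hf : is_inj_hom P P f) : [ffun x => permf hf x] = f.
Proof. by apply/ffunP => x; rewrite ffunE permE. Qed.

Lemma AutS_group (S Q : {group gT}) : group_set (AutS S Q).
Proof.
apply/group_setP; split.
  rewrite inE; apply/andP; split; first by apply/forallP => x; rewrite perm1 eqxx implybT.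
  apply/existsP; exists 1; rewrite group1; apply/forallP => x; apply/implyP => _.
  by rewrite perm1 invg1 conjg1.
move=> s t; rewrite !inE => /andP[/forallP so /existsP[g /andP[Ng /forallP sg]]].
move=> /andP[/forallP to /existsP[h /andP[Nh /forallP th]]].
apply/andP; split.
  apply/forallP => x; apply/implyP => Qx; rewrite permM.
  by have /implyP/(_ Qx)/eqP-> := so x; have /implyP/(_ Qx) := to x.
apply/existsP; exists (h * g); rewrite groupM //; apply/forallP => x; apply/implyP => Qx.
rewrite permM; have /implyP/(_ Qx)/eqP-> := sg x.
have Qxg : x ^ g^-1 \in Q.
  rewrite memJ_norm // groupV; by move: Ng; rewrite inE => /andP[_].
have /implyP/(_ Qxg)/eqP-> := th (x ^ g^-1).
by rewrite invMg conjgM.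
Qed.

End Basic.

Section Fusion.
Variable gT : finGroupType.
Implicit Types (P Q R : {group gT}) (f g h : {ffun gT -> gT}).
Variables (S : {group gT}) (F : homs gT).
Hypothesis HF : is_fusion_system S F.

Lemma F_hom P R f : P \subset S -> R \subset S -> f \in F P R -> is_inj_hom P R f.
Proof. by case: HF => H _ _ _ sP sR fF; apply: (H P R sP sR f fF). Qed.

Lemma F_conj P R x : P \subset S -> R \subset S -> x \in S -> P :^ x^-1 \subset R ->
  conjf P x \in F P R.
Proof. by case: HF => _ H _ _ sP sR Sx sPR; apply: (H P R x sP sR Sx sPR). Qed.

Lemma F_comp P Q R f h : P \subset S -> Q \subset S -> R \subset S ->
  f \in F P Q -> h \in F Q R -> compf P h f \in F P R.
Proof. by case: HF => _ _ H _ sP sQ sR fF hF; apply: (H P Q R sP sQ sR f h fF hF). Qed.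

Lemma F_inv P R f : P \subset S -> R \subset S -> f \in F P R ->
  f \in F P (f @: P) /\
  exists2 g, g \in F (f @: P) P &
    (forall x, x \in P -> g (f x) = x) /\ (forall y, y \in f @: P -> f (g y) = y).
Proof. by case: HF => _ _ _ H sP sR fF; apply: (H P R sP sR f fF). Qed.

Lemma F_id P R : P \subset S -> R \subset S -> P \subset R -> conjf P 1 \in F P R.
Proof. by move=> *; apply: F_conj; rewrite ?group1 // invg1 conjsg1. Qed.

Lemma conjf1E P : conjf P 1 = [ffun x => x].
Proof. by apply/ffunP => x; rewrite !ffunE invg1 conjg1; case: ifP. Qed.

Definition restrf (P : {set gT}) f := [ffun x => if x \in P then f x else x].

Lemma F_restr P P' R f : P \subset S -> R \subset S -> P' \subset P -> f \in F P R ->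
  restrf P' f \in F P' R.
Proof.
move=> sPS sRS sP'P fF; have sP'S := subset_trans sP'P sPS.
suff -> : restrf P' f = compf P' f (conjf P' 1).
  exact: F_comp sP'S sPS sRS (F_id sP'S sPS sP'P) fF.
apply/ffunP => x; rewrite !ffunE; case: ifP => // Px.
by [] || (rewrite invg1 conjg1 //).
Qed.

Lemma restrf_img (P : {set gT}) f : restrf P f @: P = f @: P.
Proof. by apply: eq_in_imset => x Px; rewrite ffunE Px. Qed.

Lemma F_widen P R R' f : P \subset S -> R \subset R' -> R' \subset S -> f \in F P R ->
  f \in F P R'.
Proof.
move=> sPS sRR' sR'S fF; have sRS := subset_trans sRR' sR'S.
have hf := F_hom sPS sRS fF.
suff e : compf P (conjf R 1) f = f.
  by rewrite -e; exact: F_comp sPS sRS sR'S fF (F_id sRS sR'S sRR').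
apply/ffunP => x; rewrite !ffunE; case: ifP => Px.
  by rewrite (hom_in hf Px) invg1 conjg1.
by rewrite (hom_out hf) ?Px.
Qed.

Lemma compfE (P : {set gT}) h f x : x \in P -> compf P h f x = h (f x).
Proof. by move=> Px; rewrite ffunE Px. Qed.

Lemma compf_img (P : {set gT}) h f : compf P h f @: P = h @: (f @: P).
Proof. by rewrite -imset_comp; apply: eq_in_imset => x Px; rewrite compfE. Qed.

Lemma AutF_group R : R \subset S -> group_set (AutF F R).
Proof.
move=> sRS; apply/group_setP; split.
  rewrite inE; suff -> : [ffun x => (1 : {perm gT}) x] = conjf R 1 by apply: F_id.
  by rewrite conjf1E; apply/ffunP => x; rewrite !ffunE perm1.
move=> s t; rewrite !inE => sF tF.
have hs := F_hom sRS sRS sF; have ht := F_hom sRS sRS tF.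
suff -> : [ffun x => (s * t) x] = compf R [ffun x => t x] [ffun x => s x].
  exact: (F_comp sRS sRS sRS sF tF).
apply/ffunP => x.
rewrite !ffunE permM; case: ifP => Px; first by [].
have := hom_out hs (negbT Px); have := hom_out ht (negbT Px); rewrite !ffunE => e1 e2.
by rewrite e2 e1.
Qed.

End Fusion.

Section Sat.
Variable gT : finGroupType.
Implicit Types (P Q R : {group gT}) (f g h : {ffun gT -> gT}).

Lemma fix_comm (x y : gT) : x ^ y = x -> commute x y.
Proof. by rewrite conjgE /commute => e; rewrite -{2}e !mulgA mulgV mul1g. Qed.

Lemma iter_triv (S Q R : {group gT}) b : Q \subset R -> R \subset S -> R \subset 'N(Q) ->
  'C_S(Q) \subset Q -> is_inj_hom R R b -> (forall y, y \in Q -> b y = y) ->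
  forall x, x \in R -> iter #|S| b x = x.
Proof.
move=> sQR sRS nQR cQ hb bQ x Rx.
pose w := b x * x^-1.
have Rw : w \in R by rewrite groupM ?groupV // (hom_in hb Rx).
have Qw : w \in Q.
  apply: (subsetP cQ); rewrite inE (subsetP sRS _ Rw) /=; apply/centP => q Qq.
  have Qqx : q ^ x \in Q by rewrite memJ_norm // (subsetP nQR).
  have := bQ _ Qqx; rewrite (homJ hb (subsetP sQR _ Qq) Rx) bQ // => e.
  apply: commute_sym; apply: fix_comm.
  by rewrite /w conjgM e conjgK.
have bw : b x = w * x by rewrite /w mulgKV.
have itE : forall n, iter n b x = w ^+ n * x.
  elim=> [|n IH]; first by rewrite mul1g.
  rewrite iterS IH (homM hb (groupX n Rw) Rx) (homX n hb Rw) (bQ _ Qw) bw.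
  by rewrite mulgA -expgSr.
by rewrite itE expg_cardG ?mul1g // (subsetP sRS).
Qed.

Lemma centric_sub (S : {group gT}) F Q f : centric S F Q -> f \in F Q S ->
  'C_S(f @: Q) \subset f @: Q.
Proof. by move=> cQ fF; rewrite (cQ f fF) center_sub. Qed.

Variables (p : nat) (S : {group gT}) (F : homs gT).
Hypothesis satF : saturated p S F.

Lemma key R b n : R \subset S -> b \in F R R -> p.-nat n ->
  (forall x, x \in R -> iter n b x = x) ->
  exists2 e, e \in F R S & exists2 t, t \in S & forall x, x \in R -> e (b x) = e x ^ t^-1.
Proof.
move=> sRS bF pn bn.
have [HF satN satE] := satF.
have sSS := subxx S.
have c1 : conjf R 1 \in F R S := F_id HF sRS sSS sRS.
pose gam := [arg max_(f > conjf R 1 in F R S) #|'N_S(f @: R)|].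
have [gF gmax] : gam \in F R S /\
    (forall f, f \in F R S -> #|'N_S(f @: R)| <= #|'N_S(gam @: R)|).
  by rewrite /gam; case: arg_maxnP => // g gF gmax; split.
have hg := F_hom HF sRS sSS gF.
pose R' := Group (hom_img_group hg).
have sR'S : R' \subset S := hom_sub hg.
have [gR' [g' g'F [g'g gg']]] := F_inv HF sRS sSS gF.
have gR'' : gam \in F R R' := gR'.
have g'F' : g' \in F R' R := g'F.
pose b' := compf R' gam (compf R' b g').
have b'F : b' \in F R' R'.
  exact: (F_comp HF sR'S sRS sR'S (F_comp HF sR'S sRS sRS g'F' bF) gR'').
have hb' := F_hom HF sR'S sR'S b'F.
have hb := F_hom HF sRS sRS bF.
have hg' := F_hom HF sR'S sRS g'F'.
pose s := permf hb'.
have sA : s \in AutF F R' by rewrite inE permfE.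
have b'E : forall y, y \in R' -> b' y = gam (b (g' y)).
  by move=> y Ry; rewrite !compfE.
have iterE : forall k y, y \in R' ->
    iter k b' y = gam (iter k b (g' y)) /\ iter k b (g' y) \in R.
  move=> k y Ry; elim: k => [|k [IH1 IH2]] /=; first by rewrite gg' // (hom_in hg' Ry).
  rewrite IH1 b'E; last exact: imset_f.
  by rewrite g'g // (hom_in hb IH2).
have sn : s ^+ n = 1.
  apply/permP => y; rewrite permX perm1.
  rewrite (@eq_iter _ _ b'); last by move=> z; rewrite permE.
  case: (boolP (y \in R')) => Ry.
    by have [-> _] := iterE n y Ry; rewrite bn ?gg' // (hom_in hg' Ry).
  by elim: n {pn bn sA} => //= k ->; rewrite (hom_out hb').
have ps : p.-elt s by rewrite /p_elt; apply: pnat_dvd pn; rewrite order_dvdn sn.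
pose AG := Group (AutF_group HF sR'S).
pose AS := Group (AutS_group S R').
have fnR' : fully_normalized S F R'.
  move=> f fF; have := gmax (compf R f gam) (F_comp HF sRS sR'S sSS gR'' fF).
  by rewrite compf_img.
have [_ syl] := satN R' sR'S fnR'.
have syl' : p.-Sylow(AG) AS := syl.
have sA' : <[s]> \subset AG by rewrite cycle_subG.
have [d dA sd] := Sylow_subJ syl' sA' ps.
have : s ^ d^-1 \in AS by rewrite -mem_conjg (subsetP sd) // cycle_id.
rewrite inE => /andP[_ /existsP[t /andP[Nt /forallP atE]]].
have diA : d^-1 \in AG by rewrite groupV.
have di : [ffun x => d^-1 x] \in F R' R' by move: diA; rewrite inE.
have hdi := F_hom HF sR'S sR'S di.
exists (compf R [ffun x => d^-1 x] gam).
  exact: (F_widen HF sRS sR'S sSS (F_comp HF sRS sR'S sR'S gR'' di)).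
exists t; first by move: Nt; rewrite inE => /andP[].
move=> x Rx; rewrite !compfE ?(hom_in hb Rx) //.
have yR' : [ffun x => d^-1 x] (gam x) \in R' by apply: (hom_in hdi); apply: imset_f.
have := atE ([ffun x => d^-1 x] (gam x)); rewrite yR' /= => /eqP <-.
have sE : forall y, s y = b' y by move=> y; rewrite /s /permf permE.
rewrite !ffunE conjgE invgK !permM permKV sE b'E; last exact: imset_f.
by rewrite g'g.
Qed.


Lemma uniq_ext Q R phi chi : p.-group S -> Q \subset R -> R \subset S -> R \subset 'N(Q) ->
  centric S F Q -> phi \in F R S -> chi \in F R S -> (forall y, y \in Q -> phi y = chi y) ->
  exists2 u, u \in Q & forall x, x \in R -> phi x = chi (x ^ u^-1).
Proof.
move=> pS sQR sRS nQR cQ phF chF agr.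
have [HF _ _] := satF.
have sSS := subxx S; have sQS := subset_trans sQR sRS.
have hph := F_hom HF sRS sSS phF; have hch := F_hom HF sRS sSS chF.
have [chR' [g gF [gch chg]]] := F_inv HF sRS sSS chF.
pose Rc := Group (hom_img_group hch).
have sRcS : Rc \subset S := hom_sub hch.
have gF' : g \in F Rc R := gF.
have imQ : phi @: Q = chi @: Q by apply: eq_in_imset.
have phQ := F_restr HF sRS sSS sQR phF.
have cphQ := centric_sub cQ phQ; rewrite restrf_img in cphQ.
have sub : phi @: R \subset Rc.
  apply/subsetP => _ /imsetP[x Rx ->].
  pose c := phi x * (chi x)^-1.
  have cC : c \in 'C_S(phi @: Q).
    rewrite inE groupM ?groupV ?(hom_in hph Rx) ?(hom_in hch Rx) //=.
    apply/centP => _ /imsetP[q Qq ->]; apply: commute_sym; apply: fix_comm.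
    have Qqx : q ^ x \in Q by rewrite memJ_norm // (subsetP nQR).
    have e : phi q ^ phi x = phi q ^ chi x.
      rewrite -(homJ hph (subsetP sQR _ Qq) Rx) (agr _ Qqx) (homJ hch (subsetP sQR _ Qq) Rx).
      by rewrite agr.
    by rewrite /c conjgM e conjgK.
  have cRc : c \in Rc.
    have := subsetP cphQ _ cC; rewrite imQ => cQ'.
    by have := subsetP (imsetS chi sQR) _ cQ'.
  have -> : phi x = c * chi x by rewrite /c mulgKV.
  by rewrite groupM // imset_f.
have [phR' _] := F_inv HF sRS sSS phF.
pose Rp := Group (hom_img_group hph).
have phRc : phi \in F R Rc.
  have phRp : phi \in F R Rp := phR'.
  exact: (@F_widen _ _ _ HF R Rp Rc phi sRS sub sRcS phRp).
pose b := compf R g phi.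
have bF : b \in F R R := F_comp HF sRS sRcS sRS phRc gF'.
have hb := F_hom HF sRS sRS bF.
have bQ : forall y, y \in Q -> b y = y.
  by move=> y Qy; rewrite compfE ?(subsetP sQR) // agr // gch // (subsetP sQR).
have cQQ : 'C_S(Q) \subset Q.
  have := centric_sub cQ (F_id HF sQS sSS sQS).
  by rewrite conjf1E (@eq_imset _ _ _ id) ?imset_id // => x; rewrite ffunE.
have itb := iter_triv sQR sRS nQR cQQ hb bQ.
have [e eF [t St et]] := key sRS bF pS itb.
have he := F_hom HF sRS sSS eF.
have tC : t \in 'C_S(e @: Q).
  rewrite inE St /=; apply/centP => _ /imsetP[q Qq ->].
  have := et q (subsetP sQR _ Qq); rewrite bQ // => /esym/fix_comm/commuteV.
  by rewrite invgK; apply: commute_sym.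
have := subsetP (centric_sub cQ (F_restr HF sRS sSS sQR eF)) t.
rewrite restrf_img => /(_ tC) /imsetP[u Qu tu].
exists u => // x Rx.
have Ru := subsetP sQR _ Qu.
have bx : b x = x ^ u^-1.
  apply: (hom_inj he); rewrite ?(hom_in hb Rx) ?groupJ ?groupV //.
  by rewrite et // tu (homJ he) ?groupV // (homV he).
rewrite -bx compfE // chg //; apply: (subsetP sub); exact: imset_f.
Qed.

End Sat.
Unset Implicit Arguments.

Section Main.
Variables (gT : finGroupType) (p : nat) (S T : {group gT}) (F G : homs gT).
Hypotheses (pS : p.-group S) (satF : saturated p S F) (sTS : T \subset S)
  (HG : is_fusion_system T G)
  (subGF : forall P R : {group gT}, P \subset T -> R \subset T -> G P R \subset F P R)
  (satG : saturated p T G).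

Lemma cself (Q : {group gT}) : Q \subset S -> centric S F Q -> 'C_S(Q) \subset Q.
Proof.
move=> sQS cQ; have [HF _ _] := satF.
have := centric_sub cQ (F_id HF sQS (subxx S) sQS).
by rewrite conjf1E (@eq_imset _ _ _ id) ?imset_id // => x; rewrite ffunE.
Qed.

Lemma step (P : {group gT}) : P \subset T -> centric S F P -> F P T = G P T ->
  P \proper T ->
  [/\ 'N_T(P) \subset T, centric S F 'N_T(P) & F 'N_T(P) T = G 'N_T(P) T].
Proof.
move=> sPT cP eP prPT.
have [HF _ _] := satF; have [_ _ satEG] := satG.
have sSS := subxx S; have sTT := subxx T.
pose R := 'N_T(P)%G.
have sRT : R \subset T := subsetIl _ _.
have sRS := subset_trans sRT sTS; have sPS := subset_trans sPT sTS.
have nPR : R \subset 'N(P) := subsetIr _ _.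
have pT : p.-group T := pgroupS sTS pS.
have sPR : P \subset R := proper_sub (nilpotent_proper_norm (pgroup_nil pT) prPT).
split => //.
  move=> f fF; have hf := F_hom HF sRS sSS fF.
  apply/eqP; rewrite eqEsubset; apply/andP; split.
    apply/subsetP => c cC.
    have cP' := centric_sub cP (F_restr HF sRS sSS sPR fF); rewrite restrf_img in cP'.
    have cC' : c \in 'C_S(f @: P).
      by apply: (subsetP _ _ cC); rewrite setIS // centS // imsetS.
    have cfR : c \in f @: R by apply: (subsetP (imsetS f sPR)); apply: (subsetP cP').
    by move: cC; rewrite /center !inE cfR => /andP[_ ->].
  by rewrite /center setSI // (hom_sub hf).
apply/setP => phi; apply/idP/idP; last first.
  exact: (subsetP (subGF R T sRT sTT)).
move=> phF.
have hph := F_hom HF sRS sTS phF.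
have phS : phi \in F R S := F_widen HF sRS sTS sSS phF.
pose psi := restrf P phi.
have psF : psi \in F P T := F_restr HF sRS sTS sPR phF.
have psG : psi \in G P T by rewrite -eP.
have hps := F_hom HG sPT sTT psG.
pose X := Group (hom_img_group hps).
have sXT : X \subset T := hom_sub hps.
have [psX _] := F_inv HG sPT sTT psG.
have psX' : psi \in G P X := psX.
have fc : fully_centralized T G (psi @: P).
  move=> f fG.
  have fG' : f \in G X T := fG.
  have hf := F_hom HG sXT sTT fG'.
  have fpG := F_comp HG sPT sXT sTT psX' fG'.
  have fpS : compf P f psi \in F P S.
    exact: (F_widen HF sPS sTS sSS (subsetP (subGF P T sPT sTT) _ fpG)).
  have cC := centric_sub cP fpS; rewrite compf_img in cC.
  apply: (@leq_trans #|'Z(f @: X)|).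
    apply: subset_leq_card; apply/subsetP => c cC'.
    have cS : c \in 'C_S(f @: X).
      by move: cC'; rewrite !inE => /andP[cT ->]; rewrite (subsetP sTS).
    rewrite /center inE (subsetP cC _ cS) /=; by move: cS; rewrite inE => /andP[_ ->].
  apply: leq_trans (center_img_card hf) _.
  by apply: subset_leq_card; rewrite /center setSI.
have [chi chG chE] := satEG P psi sPT psG fc.
have NphiE : Nphi T P psi = 'N_T(P).
  apply/setP => g; rewrite inE; case: (boolP (g \in 'N_T(P))) => //= gN.
  apply/existsP; exists (phi g); rewrite (hom_in hph gN) /=.
  apply/forallP => y; apply/implyP => Py.
  have gNP : g^-1 \in 'N(P) by rewrite groupV; move: gN; rewrite inE => /andP[].
  have Pyg : y ^ g^-1 \in P by rewrite memJ_norm.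
  rewrite !ffunE Py Pyg (homJ hph (subsetP sPR _ Py) (groupVr gN)).
  by rewrite (homV hph gN).
rewrite NphiE in chG.
have chG' : chi \in G R T := chG.
have chS : chi \in F R S.
  exact: (F_widen HF sRS sTS sSS (subsetP (subGF R T sRT sTT) _ chG')).
have agr : forall y, y \in P -> phi y = chi y by move=> y Py; rewrite chE // ffunE Py.
have [u Pu uE] := uniq_ext satF pS sPR sRS nPR cP phS chS agr.
have Ru := subsetP sPR _ Pu.
have cG : conjf R u \in G R R.
  apply: (F_conj HG sRT sRT (subsetP sRT _ Ru)); by rewrite conjGid ?groupV.
suff -> : phi = compf R chi (conjf R u) by exact: (F_comp HG sRT sRT sTT cG chG').
apply/ffunP => x; rewrite ffunE; case: ifP => Rx.
  by rewrite ffunE Rx uE.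
by rewrite (hom_out hph) ?Rx.
Qed.

End Main.

Theorem lemma2p7 (gT : finGroupType) (p : nat) (S T : {group gT})
    (F G : homs gT) :
  prime p -> p.-group S -> saturated p S F ->
  T \subset S -> is_subsystem S F T G -> saturated p T G ->
  (exists2 Q : {group gT}, Q \subset T &
     centric S F Q /\ F Q T = G Q T) ->
  AutF F T = AutF G T /\ T :=: S.
Proof.
move=> _ pS satF sTS [HG subGF] satG [Q sQT [cQ eQ]].
have [HF _ _] := satF.
have sSS := subxx S; have sTT := subxx T.
have main : forall n (P : {group gT}), #|T| - #|P| <= n -> P \subset T ->
    centric S F P -> F P T = G P T -> centric S F T /\ F T T = G T T.
  elim=> [|n IH] P hn sPT cP eP.
    case: (eqVproper sPT) => [eqPT | prPT]; first by move: cP eP; rewrite eqPT; split.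
    by have := proper_card prPT; lia.
  case: (eqVproper sPT) => [eqPT | prPT]; first by move: cP eP; rewrite eqPT; split.
  have [sNT cN eN] := @step gT p S T F G pS satF sTS HG subGF satG P sPT cP eP prPT.
  apply: (IH _ _ sNT cN eN).
  have pT : p.-group T := pgroupS sTS pS.
  have := proper_card (nilpotent_proper_norm (pgroup_nil pT) prPT).
  have := subset_leq_card sNT; rewrite /= => h1 h2.
  move: h1 h2 hn; set a := #|_|; set b := #|_|; set c := #|_|.
  lia.
have [cT eT] := main _ Q (leqnn _) sQT cQ eQ.
split; first by apply/setP => s; rewrite !inE eT.
have pT : p.-group T := pgroupS sTS pS.
case: (eqVproper sTS) => // prTS.
have prN := nilpotent_proper_norm (pgroup_nil pS) prTS.
suff sNT : 'N_S(T) \subset T.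
  by have := proper_card prN; have := subset_leq_card sNT; lia.
apply/subsetP => x; rewrite inE => /andP[Sx Nx].
have xT : T :^ x^-1 = T by apply/normP; rewrite groupV.
have cF : conjf T x \in F T T by apply: (F_conj HF sTS sTS Sx); rewrite xT.
have cG : conjf T x \in G T T by rewrite -eT.
have itc : forall y, y \in T -> iter #|S| (conjf T x) y = y.
  move=> y Ty.
  have itE : forall k, iter k (conjf T x) y = y ^ (x ^+ k)^-1.
    elim=> [|k IH]; first by rewrite expg0 invg1 conjg1.
    rewrite iterS IH ffunE.
    have -> : (y ^ (x ^+ k)^-1 \in T).
      by rewrite memJ_norm // groupV groupX.
    by rewrite -conjgM -invMg -expgS.
  by rewrite itE expg_cardG // invg1 conjg1.
have [e eG [t Tt et]] := key satG sTT cG pS itc.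
have he := F_hom HG sTT sTT eG.
have eT' : e @: T = T.
  by apply/eqP; rewrite eqEcard (hom_sub he) (card_hom_img he) leqnn.
have : t \in e @: T by rewrite eT'.
case/imsetP => u Tu tu.
have cy : forall y, y \in T -> y ^ x^-1 = y ^ u^-1.
  move=> y Ty; have Nx' : x^-1 \in 'N(T) by rewrite groupV.
  have Tu' : u^-1 \in T by rewrite groupV.
  apply: (hom_inj he); first by rewrite memJ_norm.
    by rewrite groupJ.
  have := et y Ty; rewrite ffunE Ty => ->.
  by rewrite tu (homJ he) ?groupV // (homV he).
have wC : x^-1 * u \in 'C_S(Q).
  rewrite inE groupM ?groupV // ?(subsetP sTS) //=.
  apply/centP => q Qq; apply: commute_sym; apply: fix_comm.
  by rewrite conjgM cy ?(subsetP sQT) // conjgKV.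
have wT : x^-1 * u \in T.
  by apply: (subsetP sQT); apply: (subsetP (@cself gT p S F satF Q (subset_trans sQT sTS) cQ)).
have : x^-1 \in T by rewrite -(mulgK u x^-1) groupM ?groupV.
by rewrite groupV.
Qed.
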